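(* Let $k:X\to Y$ be a homotopy equivalence and $x\in X$. If $Y$ is transfinitely $\pi_1$-commutative at $k(x)$, then $X$ is transfinitely $\pi_1$-commutative at $x$. In particular, if $f:(X,x)\to(Y,y)$ is a based homotopy equivalence, then $X$ is transfinitely $\pi_1$-commutative at $x$ if and only if $Y$ is transfinitely $\pi_1$-commutative at $y$.
   Context: Let $\mathbb{H}=\bigcup_nC_n$ be the Hawaiian earring ($C_n\subset\mathbb{R}^2$ the circle of radius $1/n$ centered at $(1/n,0)$, basepoint $b_0=(0,0)$), $\ell_n$ the counterclockwise loop on $C_n$. A sequence of loops $\alpha_n\in\Omega(X,x)$ is a null-sequence if every neighborhood of $x$ contains all but finitely many $\mathrm{Im}(\alpha_n)$; then there is a unique map $f:(\mathbb{H},b_0)\to(X,x)$ with $f\circ\ell_n=\alpha_n$. With $\mathcal{C}\subseteq[0,1]$ the middle-thirds Cantor set and $[0,1]\setminus\mathcal{C}=\bigcup_{n\ge1}\bigcup_{k=1}^{2^{n-1}}I_n^k$ (open intervals of length $3^{-n}$, indexed left to right for fixed $n$), $\ell_\tau$ is the loop with $\ell_\tau(\mathcal{C})=b_0$ equal to $\ell_{2^{n-1}+k-1}$ (linearly reparametrized) on $\overline{I_n^k}$, and $\prod_\tau\alpha_n:=f\circ\ell_\tau$. $X$ is transfinitely $\pi_1$-commutative at $x$ if $[\prod_\tau\alpha_n]=[\prod_\tau\alpha_{\phi(n)}]$ in $\pi_1(X,x)$ for every null-sequence $\alpha_n\in\Omega(X,x)$ and every bijection $\phi:\mathbb{N}\to\mathbb{N}$.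 *)

(* Defs.v *)
From Stdlib Require Import Reals Lra Arith.
Open Scope R_scope.

Record TopSpace := {
  carrier :> Type;
  is_open : (carrier -> Prop) -> Prop;
  open_full : is_open (fun _ => True);
  open_inter : forall U V, is_open U -> is_open V -> is_open (fun z => U z /\ V z);
  open_union : forall F : (carrier -> Prop) -> Prop,
      (forall U, F U -> is_open U) -> is_open (fun z => exists U, F U /\ U z)
}.

Definition in01 (t : R) : Prop := 0 <= t <= 1.

Definition continuous {X Y : TopSpace} (f : X -> Y) : Prop :=
  forall V : Y -> Prop, is_open Y V -> is_open X (fun z => V (f z)).

Definition cont_X01 {X Y : TopSpace} (H : X -> R -> Y) : Prop :=
  forall (z : X) (t : R), in01 t -> forall V : Y -> Prop, is_open Y V -> V (H z t) ->
    exists U : X -> Prop, is_open X U /\ U z /\ exists d, d > 0 /\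
      forall z' t', U z' -> in01 t' -> Rabs (t' - t) < d -> V (H z' t').

Definition homotopic {X Y : TopSpace} (f g : X -> Y) : Prop :=
  exists H : X -> R -> Y, cont_X01 H /\
    (forall z, H z 0 = f z) /\ (forall z, H z 1 = g z).

Definition based_homotopic {X Y : TopSpace} (x0 : X) (f g : X -> Y) : Prop :=
  exists H : X -> R -> Y, cont_X01 H /\
    (forall z, H z 0 = f z) /\ (forall z, H z 1 = g z) /\
    (forall t, in01 t -> H x0 t = f x0).

Definition homotopy_equivalence {X Y : TopSpace} (k : X -> Y) : Prop :=
  continuous k /\ exists g : Y -> X, continuous g /\
    homotopic (fun z => g (k z)) (fun z => z) /\
    homotopic (fun w => k (g w)) (fun w => w).

Definition based_homotopy_equivalence {X Y : TopSpace} (f : X -> Y) (x : X) (y : Y) : Prop :=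
  continuous f /\ f x = y /\ exists g : Y -> X, continuous g /\ g y = x /\
    based_homotopic x (fun z => g (f z)) (fun z => z) /\
    based_homotopic y (fun w => f (g w)) (fun w => w).

(** Paths are functions R -> X; only their values on [0,1] matter. *)
Definition path_continuous {X : TopSpace} (p : R -> X) : Prop :=
  forall t, in01 t -> forall V : X -> Prop, is_open X V -> V (p t) ->
    exists d, d > 0 /\ forall s, in01 s -> Rabs (s - t) < d -> V (p s).

Definition is_loop {X : TopSpace} (x : X) (p : R -> X) : Prop :=
  path_continuous p /\ p 0 = x /\ p 1 = x.

(** [p] = [q] in pi_1(X,x): homotopy rel endpoints between loops at x. *)
Definition loop_homotopic {X : TopSpace} (x : X) (p q : R -> X) : Prop :=
  exists H : R -> R -> X,
    (forall s t, in01 s -> in01 t -> forall V : X -> Prop, is_open X V -> V (H s t) ->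
       exists d, d > 0 /\ forall s' t', in01 s' -> in01 t' ->
         Rabs (s' - s) < d -> Rabs (t' - t) < d -> V (H s' t')) /\
    (forall t, in01 t -> H 0 t = p t) /\
    (forall t, in01 t -> H 1 t = q t) /\
    (forall s, in01 s -> H s 0 = x /\ H s 1 = x).

(** Null-sequence of loops at x (indexed from 0: alpha 0 is the paper's alpha_1). *)
Definition null_sequence {X : TopSpace} (x : X) (alpha : nat -> R -> X) : Prop :=
  (forall n, is_loop x (alpha n)) /\
  forall U : X -> Prop, is_open X U -> U x ->
    exists N, forall n, (N <= n)%nat -> forall t, in01 t -> U (alpha n t).

(** Left endpoint of the Cantor gap I_{m+1}^{j+1} (level m+1, j-th from the left,
    0 <= j < 2^m); the gap is the open interval (gapL m j, gapL m j + 3^-(m+1)). *)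
Fixpoint gapL (m j : nat) : R :=
  match m with
  | O => 1 / 3
  | S m' => if Nat.ltb j (2 ^ m') then gapL m' j / 3
            else 2 / 3 + gapL m' (j - 2 ^ m') / 3
  end.

Definition gapLen (m : nat) : R := / 3 ^ (S m).

Definition in_cantor (t : R) : Prop :=
  in01 t /\ forall m j, (j < 2 ^ m)%nat -> ~ (gapL m j < t < gapL m j + gapLen m).

(** p is (on [0,1]) the transfinite product prod_tau alpha_n = f o l_tau:
    constant x on the Cantor set, and on the closure of I_{m+1}^{j+1} equal to
    the loop with paper index 2^m + j + 1 - 1 (0-based index 2^m + j - 1),
    linearly reparametrized. *)
Definition tau_product {X : TopSpace} (x : X) (alpha : nat -> R -> X) (p : R -> X) : Prop :=
  (forall t, in_cantor t -> p t = x) /\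
  (forall m j t, (j < 2 ^ m)%nat -> gapL m j <= t <= gapL m j + gapLen m ->
     p t = alpha (2 ^ m + j - 1)%nat ((t - gapL m j) / gapLen m)).

Definition bijection (phi : nat -> nat) : Prop :=
  (forall a b, phi a = phi b -> a = b) /\ (forall b, exists a, phi a = b).

Definition transfinitely_commutative (X : TopSpace) (x : X) : Prop :=
  forall alpha : nat -> R -> X, null_sequence x alpha ->
  forall phi : nat -> nat, bijection phi ->
  forall p q : R -> X,
    tau_product x alpha p -> tau_product x (fun n => alpha (phi n)) q ->
    loop_homotopic x p q.

(* Main.v *)
Require Import Defs.
From Stdlib Require Import Reals Lra Lia Classical Arith.
Open Scope R_scope.

Ltac rabs := unfold Rabs in *; repeat match goal with
  | |- context [Rcase_abs ?x] => destruct (Rcase_abs x)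
  | H: context [Rcase_abs ?x] |- _ => destruct (Rcase_abs x)
end.

Ltac dec := repeat (match goal with |- context [Rle_dec ?a ?b] =>
  lazymatch a with context [Rle_dec _ _] => fail | _ =>
  lazymatch b with context [Rle_dec _ _] => fail | _ =>
  destruct (Rle_dec a b) end end end; cbv iota).

Lemma Rmax_lip a b a' b' : Rabs (Rmax a' b' - Rmax a b) <= Rabs (a'-a) + Rabs (b'-b).
Proof. unfold Rmax; destruct (Rle_dec a' b'), (Rle_dec a b); rabs; lra. Qed.
Lemma Rmin_lip a b a' b' : Rabs (Rmin a' b' - Rmin a b) <= Rabs (a'-a) + Rabs (b'-b).
Proof. unfold Rmin; destruct (Rle_dec a' b'), (Rle_dec a b); rabs; lra. Qed.

Definition lip (f : R -> R -> R) := exists L, 0 < L /\ forall s t s' t',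
  Rabs (f s' t' - f s t) <= L * (Rabs (s'-s) + Rabs (t'-t)).

Lemma lip_const c : lip (fun _ _ => c).
Proof. exists 1; split; [lra|]. intros. rewrite Rminus_diag, Rabs_R0.
 pose proof (Rabs_pos (s'-s)); pose proof (Rabs_pos (t'-t)); lra. Qed.
Lemma lip_fst : lip (fun s _ => s).
Proof. exists 1; split; [lra|]. intros. pose proof (Rabs_pos (t'-t)); lra. Qed.
Lemma lip_snd : lip (fun _ t => t).
Proof. exists 1; split; [lra|]. intros. pose proof (Rabs_pos (s'-s)); lra. Qed.
Lemma lip_plus f g : lip f -> lip g -> lip (fun s t => f s t + g s t).
Proof. intros [L1 [H1 F]] [L2 [H2 G]]. exists (L1+L2); split; [lra|]. intros.
 specialize (F s t s' t'); specialize (G s t s' t').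
 replace (f s' t' + g s' t' - (f s t + g s t)) with ((f s' t' - f s t) + (g s' t' - g s t)) by ring.
 eapply Rle_trans; [apply Rabs_triang|]. nra. Qed.
Lemma lip_minus f g : lip f -> lip g -> lip (fun s t => f s t - g s t).
Proof. intros [L1 [H1 F]] [L2 [H2 G]]. exists (L1+L2); split; [lra|]. intros.
 specialize (F s t s' t'); specialize (G s t s' t').
 replace (f s' t' - g s' t' - (f s t - g s t)) with ((f s' t' - f s t) + - (g s' t' - g s t)) by ring.
 eapply Rle_trans; [apply Rabs_triang|]. rewrite Rabs_Ropp. nra. Qed.
Lemma lip_scal c f : lip f -> lip (fun s t => c * f s t).
Proof. intros [L1 [H1 F]]. exists ((Rabs c + 1) * L1); split.
 { pose proof (Rabs_pos c); nra. } intros.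
 specialize (F s t s' t').
 replace (c * f s' t' - c * f s t) with (c * (f s' t' - f s t)) by ring.
 rewrite Rabs_mult. pose proof (Rabs_pos c). pose proof (Rabs_pos (f s' t' - f s t)).
 pose proof (Rabs_pos (s'-s)); pose proof (Rabs_pos (t'-t)). nra. Qed.
Lemma lip_max f g : lip f -> lip g -> lip (fun s t => Rmax (f s t) (g s t)).
Proof. intros [L1 [H1 F]] [L2 [H2 G]]. exists (L1+L2); split; [lra|]. intros.
 specialize (F s t s' t'); specialize (G s t s' t').
 eapply Rle_trans; [apply Rmax_lip|]. nra. Qed.
Lemma lip_min f g : lip f -> lip g -> lip (fun s t => Rmin (f s t) (g s t)).
Proof. intros [L1 [H1 F]] [L2 [H2 G]]. exists (L1+L2); split; [lra|]. intros.
 specialize (F s t s' t'); specialize (G s t s' t').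
 eapply Rle_trans; [apply Rmin_lip|]. nra. Qed.

Definition c01 (r : R) := Rmax 0 (Rmin 1 r).
Lemma lip_c01 f : lip f -> lip (fun s t => c01 (f s t)).
Proof. intros. unfold c01. apply lip_max; [apply lip_const|]. apply lip_min; [apply lip_const|auto]. Qed.
Lemma c01_in r : in01 (c01 r).
Proof. unfold c01, in01, Rmax, Rmin. dec; lra. Qed.
Lemma c01_id r : in01 r -> c01 r = r.
Proof. unfold c01, in01, Rmax, Rmin. intros. dec; lra. Qed.

Ltac lipt := repeat first [apply lip_c01 | apply lip_max | apply lip_min | apply lip_fst
  | apply lip_snd | apply lip_minus | apply lip_plus | apply lip_scal | apply lip_const].

Definition cont2 {X : TopSpace} (F : R -> R -> X) := forall s t, in01 s -> in01 t ->
  forall V : X -> Prop, is_open X V -> V (F s t) -> exists d, d > 0 /\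
    forall s' t', in01 s' -> in01 t' -> Rabs (s'-s) < d -> Rabs (t'-t) < d -> V (F s' t').

Definition into01 (f : R -> R -> R) := forall s t, in01 s -> in01 t -> in01 (f s t).

Lemma lip_small f (s t s' t' e : R) : (exists L, 0 < L /\ forall s t s' t',
  Rabs (f s' t' - f s t) <= L * (Rabs (s'-s) + Rabs (t'-t))) -> e > 0 ->
  exists d, d > 0 /\ forall s' t', Rabs (s'-s) < d -> Rabs (t'-t) < d -> Rabs (f s' t' - f s t) < e.
Proof. intros [L [HL F]] He. exists (e / (2*L)). split. apply Rdiv_lt_0_compat; lra.
 intros a b Ha Hb. specialize (F s t a b).
 assert (E : 2*L*(e/(2*L)) = e) by (field; lra). nra. Qed.

Lemma cont2_reparam {X : TopSpace} (F : R -> R -> X) a b : cont2 F -> lip a -> lip b ->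
  into01 a -> into01 b -> cont2 (fun s t => F (a s t) (b s t)).
Proof. intros HF La Lb Ia Ib s t Hs Ht V HV HVs.
 destruct (HF _ _ (Ia s t Hs Ht) (Ib s t Hs Ht) V HV HVs) as [d [Hd Hd']].
 destruct (lip_small a s t s t d La Hd) as [d1 [Hd1 Hd1']].
 destruct (lip_small b s t s t d Lb Hd) as [d2 [Hd2 Hd2']].
 exists (Rmin d1 d2). split. apply Rmin_pos; lra.
 intros s' t' Hs' Ht' H1 H2. pose proof (Rmin_l d1 d2); pose proof (Rmin_r d1 d2).
 apply Hd'; auto. apply Hd1'; lra. apply Hd2'; lra. Qed.

Lemma cont2_H {X Z : TopSpace} (H : X -> R -> Z) P v : cont_X01 H -> cont2 P -> lip v ->
  into01 v -> cont2 (fun s t => H (P s t) (v s t)).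
Proof. intros HH HP Lv Iv s t Hs Ht V HV HVs.
 destruct (HH (P s t) (v s t) (Iv s t Hs Ht) V HV HVs) as [U [HU [HUz [d1 [Hd1 Hd1']]]]].
 destruct (HP s t Hs Ht U HU HUz) as [d2 [Hd2 Hd2']].
 destruct (lip_small v s t s t d1 Lv Hd1) as [d3 [Hd3 Hd3']].
 exists (Rmin d2 d3). split. apply Rmin_pos; lra.
 intros s' t' Hs' Ht' H1 H2. pose proof (Rmin_l d2 d3); pose proof (Rmin_r d2 d3).
 apply Hd1'. apply Hd2'; auto; lra. auto. apply Hd3'; lra. Qed.

Lemma cont2_comp {X Z : TopSpace} (g : X -> Z) P : continuous g -> cont2 P -> cont2 (fun s t => g (P s t)).
Proof. intros Hg HP s t Hs Ht V HV HVs. apply (HP s t Hs Ht (fun z => V (g z))); auto. Qed.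

Lemma cont2_path {X : TopSpace} (p : R -> X) : path_continuous p -> cont2 (fun _ t => p t).
Proof. intros Hp s t Hs Ht V HV HVs. destruct (Hp t Ht V HV HVs) as [d [Hd Hd']].
 exists d; split; auto. Qed.

Lemma cont2_const {X : TopSpace} (x : X) : cont2 (fun _ _ => x).
Proof. intros s t Hs Ht V HV HVs. exists 1; split; auto; lra. Qed.

Lemma cont2_swap {X : TopSpace} (F : R -> R -> X) : cont2 F -> cont2 (fun s t => F t s).
Proof. intros HF s t Hs Ht V HV HVs. destruct (HF t s Ht Hs V HV HVs) as [d [Hd Hd']].
 exists d; split; auto. Qed.

Lemma cont2_glue_s {X : TopSpace} c (A B : R -> R -> X) : cont2 A -> cont2 B ->
  (forall t, in01 t -> A c t = B c t) ->
  cont2 (fun s t => if Rle_dec s c then A s t else B s t).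
Proof. intros HA HB E s t Hs Ht V HV HVs.
 destruct (Rtotal_order s c) as [Hlt|[Heq|Hgt]].
 - destruct (Rle_dec s c) as [_|n]; [|lra].
   destruct (HA s t Hs Ht V HV HVs) as [d [Hd Hd']].
   exists (Rmin d (c - s)). split. apply Rmin_pos; lra.
   intros s' t' Hs' Ht' H1 H2. pose proof (Rmin_l d (c-s)); pose proof (Rmin_r d (c-s)).
   destruct (Rle_dec s' c). apply Hd'; auto; lra.
   apply Rabs_def2 in H1. lra.
 - subst s. destruct (Rle_dec c c) as [_|n]; [|lra].
   assert (HVB : V (B c t)) by (rewrite <- E; auto).
   destruct (HA c t Hs Ht V HV HVs) as [d [Hd Hd']].
   destruct (HB c t Hs Ht V HV HVB) as [d2 [Hd2 Hd2']].
   exists (Rmin d d2). split. apply Rmin_pos; lra.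
   intros s' t' Hs' Ht' H1 H2. pose proof (Rmin_l d d2); pose proof (Rmin_r d d2).
   destruct (Rle_dec s' c). apply Hd'; auto; lra. apply Hd2'; auto; lra.
 - destruct (Rle_dec s c) as [n|_]; [lra|].
   destruct (HB s t Hs Ht V HV HVs) as [d [Hd Hd']].
   exists (Rmin d (s - c)). split. apply Rmin_pos; lra.
   intros s' t' Hs' Ht' H1 H2. pose proof (Rmin_l d (s-c)); pose proof (Rmin_r d (s-c)).
   destruct (Rle_dec s' c). apply Rabs_def2 in H1. lra.
   apply Hd'; auto; lra.
Qed.

Lemma cont2_glue_t {X : TopSpace} c (A B : R -> R -> X) : cont2 A -> cont2 B ->
  (forall s, in01 s -> A s c = B s c) ->
  cont2 (fun s t => if Rle_dec t c then A s t else B s t).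
Proof. intros HA HB E.
 apply (cont2_swap (fun s t => if Rle_dec s c then A t s else B t s)).
 apply cont2_glue_s; [apply (cont2_swap A)|apply (cont2_swap B)|]; auto. Qed.

Lemma gapLen_pos m : 0 < gapLen m.
Proof. unfold gapLen. apply Rinv_0_lt_compat, pow_lt; lra. Qed.
Lemma gapLen_S m : gapLen (S m) = gapLen m / 3.
Proof. unfold gapLen. simpl. pose proof (pow_lt 3 m ltac:(lra)). field. lra. Qed.

Lemma gap_bounds m : forall j, 0 <= gapL m j /\ gapL m j + gapLen m <= 1.
Proof. induction m; intros j.
 - simpl. unfold gapLen. simpl. lra.
 - rewrite gapLen_S. simpl. destruct (Nat.ltb j (2^m)).
   + destruct (IHm j). lra.
   + destruct (IHm (j - 2^m)%nat). lra.
Qed.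

Lemma cantor0 : in_cantor 0.
Proof. split. unfold in01; lra. intros m j _ H. destruct (gap_bounds m j). lra. Qed.
Lemma cantor1 : in_cantor 1.
Proof. split. unfold in01; lra. intros m j _ H. destruct (gap_bounds m j). lra. Qed.

Lemma fin_min (Q : nat -> R -> Prop) : (forall i d d', 0 < d' <= d -> Q i d -> Q i d') ->
  forall n, (forall i, (i < n)%nat -> exists d, d > 0 /\ Q i d) ->
  exists d, d > 0 /\ forall i, (i < n)%nat -> Q i d.
Proof. intros Hm. induction n; intros H.
 - exists 1; split; [lra|]. intros; lia.
 - destruct IHn as [d1 [Hd1 H1]]. { intros; apply H; lia. }
   destruct (H n) as [d2 [Hd2 H2]]. lia.
   exists (Rmin d1 d2). split. apply Rmin_pos; lra.
   pose proof (Rmin_l d1 d2); pose proof (Rmin_r d1 d2); pose proof (Rmin_pos d1 d2 Hd1 Hd2).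
   intros i Hi. destruct (Nat.eq_dec i n). subst. apply (Hm _ d2); auto; lra.
   apply (Hm _ d1); [lra|]. apply H1; lia.
Qed.

Lemma aff_in a L s : 0 < L -> a <= s <= a + L -> in01 ((s - a)/L).
Proof. intros HL Hs. set (u := (s-a)/L). assert (u*L = s-a) by (unfold u; field; lra).
 unfold in01. split; nra. Qed.

Lemma tau_cont (X : TopSpace) (x : X) alpha p :
  null_sequence x alpha -> tau_product x alpha p -> path_continuous p.
Proof.
 intros [Hl Hn] [Hc Hg] t Ht V HV Hpt.
 destruct (classic (in_cantor t)) as [Ct|NCt].
 2: {
  assert (exists m j, (j < 2^m)%nat /\ gapL m j < t < gapL m j + gapLen m) as [m [j [Hj Hin]]].
  { apply NNPP; intro Hne. apply NCt. split; auto. intros m j Hj Hin. apply Hne. eauto. }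
  pose proof (gapLen_pos m) as HL.
  rewrite (Hg m j t Hj) in Hpt by lra.
  assert (Hgs : forall s, gapL m j <= s <= gapL m j + gapLen m -> p s = alpha (2^m+j-1)%nat ((s - gapL m j)/gapLen m)) by (intros; apply Hg; auto).
  set (a := gapL m j) in *. set (L := gapLen m) in *.
  destruct (proj1 (Hl (2^m+j-1)%nat) ((t-a)/L) (aff_in a L t HL ltac:(lra)) V HV Hpt) as [d1 [Hd1 Hd1']].
  exists (Rmin (d1*L) (Rmin (t-a) (a+L-t))). split.
  { apply Rmin_pos. nra. apply Rmin_pos; lra. }
  intros s Hs Hst.
  pose proof (Rmin_l (d1*L) (Rmin (t-a) (a+L-t))); pose proof (Rmin_r (d1*L) (Rmin (t-a) (a+L-t))).
  pose proof (Rmin_l (t-a) (a+L-t)); pose proof (Rmin_r (t-a) (a+L-t)).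
  apply Rabs_def2 in Hst.
  rewrite (Hgs s) by lra. apply Hd1'. apply aff_in; lra.
  replace ((s - a)/L - (t-a)/L) with ((s-t)/L) by (field; lra).
  apply Rabs_def1.
  + apply (Rmult_lt_reg_r L); auto. unfold Rdiv. rewrite Rmult_assoc, Rinv_l; lra.
  + apply (Rmult_lt_reg_r L); auto. unfold Rdiv. rewrite Rmult_assoc, Rinv_l; lra.
 }
 rewrite (Hc t Ct) in Hpt. destruct (Hn V HV Hpt) as [N HN].
 set (P := fun m j d => forall s, in01 s -> Rabs (s - t) < d ->
   gapL m j <= s <= gapL m j + gapLen m ->
   V (alpha (2^m+j-1)%nat ((s - gapL m j)/gapLen m))).
 assert (Hloc : forall m j, (j < 2^m)%nat -> exists d, d > 0 /\ P m j d).
 { intros m j Hj. pose proof (gapLen_pos m) as HL.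
   pose proof (proj2 Ct m j Hj) as HC. unfold P.
   set (a := gapL m j) in *. set (L := gapLen m) in *.
   destruct (Hl (2^m+j-1)%nat) as [Hpc [H0 H1]].
   destruct (Rtotal_order t a) as [lt|[eq|gt]].
   - exists (a - t). split; [lra|]. intros s _ Hs Hs2. apply Rabs_def2 in Hs. lra.
   - assert (Hx0 : V (alpha (2 ^ m + j - 1)%nat 0)) by (rewrite H0; auto).
     destruct (Hpc 0 ltac:(unfold in01; lra) V HV Hx0) as [d1 [Hd1 Hd1']].
     exists (d1*L). split. nra. intros s _ Hs Hs2. apply Hd1'. apply aff_in; lra.
     set (u := (s-a)/L). assert (u*L = s-a) by (unfold u; field; lra).
     apply Rabs_def2 in Hs. apply Rabs_def1; nra.
   - destruct (Rtotal_order t (a+L)) as [lt2|[eq2|gt2]].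
     + exfalso. apply HC. lra.
     + assert (Hx1 : V (alpha (2 ^ m + j - 1)%nat 1)) by (rewrite H1; auto).
       destruct (Hpc 1 ltac:(unfold in01; lra) V HV Hx1) as [d1 [Hd1 Hd1']].
       exists (d1*L). split. nra. intros s _ Hs Hs2. apply Hd1'. apply aff_in; lra.
       set (u := (s-a)/L). assert (u*L = s-a) by (unfold u; field; lra).
       apply Rabs_def2 in Hs. apply Rabs_def1; nra.
     + exists (t - (a+L)). split; [lra|]. intros s _ Hs Hs2. apply Rabs_def2 in Hs. lra. }
 assert (HP : forall m, (m < N)%nat -> exists d, d > 0 /\ forall j, (j < 2^m)%nat -> P m j d).
 { intros m _. apply (fin_min (P m)).
   - intros i d d' Hd HQ s Hs Hs2 Hs3. apply HQ; auto. lra.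
   - intros i Hi. apply Hloc; auto. }
 destruct (fin_min (fun m d => forall j, (j < 2^m)%nat -> P m j d)) with (n := N) as [d [Hd Hd']].
 { intros i d d' Hd HQ j Hj s Hs Hs2 Hs3. apply (HQ j Hj); auto. lra. }
 { auto. }
 exists d. split; auto. intros s Hs Hst.
 destruct (classic (in_cantor s)) as [Cs|NCs].
 { rewrite (Hc s Cs). auto. }
 assert (exists m j, (j < 2^m)%nat /\ gapL m j < s < gapL m j + gapLen m) as [m [j [Hj Hin]]].
 { apply NNPP; intro Hne. apply NCs. split; auto. intros m j Hj Hin. apply Hne. eauto. }
 rewrite (Hg m j s Hj) by lra.
 destruct (lt_dec m N) as [HmN|HmN].
 - apply (Hd' m HmN j Hj s Hs Hst). lra.
 - apply HN. pose proof (Nat.pow_gt_lin_r 2 N ltac:(lia)).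
   pose proof (Nat.pow_le_mono_r 2 N m ltac:(lia) ltac:(lia)). lia.
   apply aff_in. apply gapLen_pos. lra.
Qed.

Lemma null_perm (X : TopSpace) (x : X) alpha phi : null_sequence x alpha -> bijection phi ->
  null_sequence x (fun n => alpha (phi n)).
Proof. intros [Hl Hn] [Hi Hs]. split. intros; apply Hl.
 assert (B : forall N, exists N', forall n, (N' <= n)%nat -> (N <= phi n)%nat).
 { induction N. exists 0%nat; intros; lia.
   destruct IHN as [N' HN']. destruct (Hs N) as [a Ha].
   exists (Nat.max N' (S a)). intros n Hn'.
   assert (N <= phi n)%nat by (apply HN'; lia).
   destruct (Nat.eq_dec (phi n) N). rewrite <- Ha in e. apply Hi in e. lia. lia. }
 intros U HU HUx. destruct (Hn U HU HUx) as [N HN]. destruct (B N) as [N' HN'].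
 exists N'. intros n Hn2 t Ht. apply HN; auto. Qed.

Lemma null_map (X Y : TopSpace) (k : X -> Y) (x : X) alpha : continuous k ->
  null_sequence x alpha -> null_sequence (k x) (fun n t => k (alpha n t)).
Proof. intros Hk [Hl Hn]. split.
 - intros n. destruct (Hl n) as [Hp [H0 H1]]. split; [|rewrite H0, H1; auto].
   intros t Ht V HV HVt. apply (Hp t Ht (fun z => V (k z))); auto.
 - intros U HU HUx. apply (Hn (fun z => U (k z))); auto.
Qed.

Definition rho (l t : R) := c01 (Rmax (t - /3*l) (Rmin (3*t-1) (t + /3*l))).
Definition vv (l t : R) := Rmax (1 - l) (Rmax (1 - 3*t) (3*t - 2)).

Ltac rcomp := unfold rho, vv, c01, Rmax, Rmin, in01 in *; intros; dec; lra.

Lemma rho_0 t : in01 t -> rho 0 t = t. Proof. rcomp. Qed.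
Lemma vv_0 t : in01 t -> vv 0 t = 1. Proof. rcomp. Qed.
Lemma rho_l0 l : in01 l -> rho l 0 = 0. Proof. rcomp. Qed.
Lemma rho_l1 l : in01 l -> rho l 1 = 1. Proof. rcomp. Qed.
Lemma vv_l0 l : in01 l -> vv l 0 = 1. Proof. rcomp. Qed.
Lemma vv_l1 l : in01 l -> vv l 1 = 1. Proof. rcomp. Qed.
Lemma rho_1a t : in01 t -> t <= /3 -> rho 1 t = 0. Proof. rcomp. Qed.
Lemma rho_1b t : /3 <= t <= 2/3 -> rho 1 t = 3*t-1. Proof. rcomp. Qed.
Lemma rho_1c t : in01 t -> 2/3 <= t -> rho 1 t = 1. Proof. rcomp. Qed.
Lemma vv_1b t : /3 <= t <= 2/3 -> vv 1 t = 0. Proof. rcomp. Qed.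
Lemma vv_in : into01 vv. Proof. unfold into01. rcomp. Qed.
Lemma c01_0 : c01 0 = 0. Proof. rcomp. Qed.
Lemma c01_1 : c01 1 = 1. Proof. rcomp. Qed.

Lemma lip_rho : lip rho. Proof. unfold rho. lipt. Qed.
Lemma lip_vv : lip vv. Proof. unfold vv. lipt. Qed.

Lemma into_c01 f : into01 (fun s t => c01 (f s t)).
Proof. intros s t _ _. apply c01_in. Qed.

Lemma piece_cont {X : TopSpace} (H : X -> R -> X) (p : R -> X) :
  cont_X01 H -> path_continuous p -> cont2 (fun l t => H (p (rho l t)) (vv l t)).
Proof. intros HH Hp. apply (cont2_H H (fun l t => p (rho l t))); auto.
 - apply (cont2_reparam (fun _ t => p t) (fun l t => l) rho).
   apply cont2_path; auto. apply lip_fst. apply lip_rho.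
   intros s t Hs _; auto. intros s t _ _. apply c01_in.
 - apply lip_vv.
 - apply vv_in.
Qed.

Lemma conj_homotopy (X Y : TopSpace) (H : X -> R -> X) (g : Y -> X) (k : X -> Y)
  (K : R -> R -> Y) (x : X) (p q : R -> X) :
  cont_X01 H -> (forall z, H z 0 = g (k z)) -> (forall z, H z 1 = z) -> continuous g ->
  path_continuous p -> path_continuous q -> p 0 = x -> p 1 = x -> q 0 = x -> q 1 = x ->
  cont2 K -> (forall t, in01 t -> K 0 t = k (p t)) -> (forall t, in01 t -> K 1 t = k (q t)) ->
  (forall s, in01 s -> K s 0 = k x /\ K s 1 = k x) -> loop_homotopic x p q.
Proof.
 intros HH H0 H1 Hg Hp Hq p0 p1 q0 q1 HK K0 K1 Ke.
 set (F1 := fun l t => H (p (rho l t)) (vv l t)).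
 set (F3 := fun l t => H (q (rho l t)) (vv l t)).
 set (Am := fun (mu t : R) => g (K mu (c01 (3*t-1)))).
 set (Bm := fun (mu t : R) => H x (vv 1 t)).
 set (Gi := fun mu t => if Rle_dec t (/3) then Bm mu t else Am mu t).
 set (Gm := fun mu t => if Rle_dec t (2/3) then Gi mu t else Bm mu t).
 set (P1 := fun s t => F1 (c01 (3*s)) t).
 set (Pm := fun s t => Gm (c01 (3*s-1)) t).
 set (P3 := fun s t => F3 (c01 (3-3*s)) t).
 set (B23 := fun s t => if Rle_dec s (2/3) then Pm s t else P3 s t).
 assert (cF1 : cont2 F1) by (apply piece_cont; auto).
 assert (cF3 : cont2 F3) by (apply piece_cont; auto).
 assert (cAm : cont2 Am).
 { apply (cont2_comp g (fun mu t => K mu (c01 (3*t-1)))); auto.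
   apply (cont2_reparam K (fun mu t => mu) (fun mu t => c01 (3*t-1))); auto.
   apply lip_fst. lipt. intros s t Hs _; auto. apply into_c01. }
 assert (cBm : cont2 Bm).
 { apply (cont2_H H (fun _ _ => x) (fun mu t => vv 1 t)); auto. apply cont2_const.
   unfold vv; lipt. intros s t _ Ht. apply vv_in; auto. unfold in01; lra. }
 assert (Ev : vv 1 (/3) = 0) by (apply vv_1b; lra).
 assert (Ev2 : vv 1 (2/3) = 0) by (apply vv_1b; lra).
 assert (cGi : cont2 Gi).
 { apply cont2_glue_t; auto. intros s Hs. unfold Am, Bm. rewrite Ev, H0.
   replace (c01 (3 * / 3 - 1)) with 0 by (unfold c01, Rmax, Rmin; dec; lra).
   rewrite (proj1 (Ke s Hs)). auto. }
 assert (cGm : cont2 Gm).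
 { apply cont2_glue_t; auto. intros s Hs. unfold Gi, Am, Bm.
   destruct (Rle_dec (2/3) (/3)); [lra|]. rewrite Ev2, H0.
   replace (c01 (3 * (2 / 3) - 1)) with 1 by (unfold c01, Rmax, Rmin; dec; lra).
   rewrite (proj2 (Ke s Hs)). auto. }
 assert (cP1 : cont2 P1).
 { apply (cont2_reparam F1 (fun s t => c01 (3*s)) (fun s t => t)); auto.
   lipt. apply lip_snd. apply into_c01. intros s t _ Ht; auto. }
 assert (cPm : cont2 Pm).
 { apply (cont2_reparam Gm (fun s t => c01 (3*s-1)) (fun s t => t)); auto.
   lipt. apply lip_snd. apply into_c01. intros s t _ Ht; auto. }
 assert (cP3 : cont2 P3).
 { apply (cont2_reparam F3 (fun s t => c01 (3-3*s)) (fun s t => t)); auto.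
   lipt. apply lip_snd. apply into_c01. intros s t _ Ht; auto. }
 assert (Mid : forall (r : R -> X) t, in01 t -> r 0 = x -> r 1 = x ->
     (forall u, in01 u -> H (r u) 0 = g (K (c01 (3*t-1)) u) \/ True) -> True) by auto.
 assert (Eq1 : forall t, in01 t -> P1 (/3) t = Pm (/3) t).
 { intros t Ht. unfold P1, Pm, F1, Gm, Gi, Am, Bm.
   replace (c01 (3 * /3)) with 1 by (unfold c01, Rmax, Rmin; dec; lra).
   replace (c01 (3 * /3 - 1)) with 0 by (unfold c01, Rmax, Rmin; dec; lra).
   destruct (Rle_dec t (2/3)); destruct (Rle_dec t (/3)).
   - rewrite rho_1a, p0; auto.
   - rewrite (c01_id (3*t-1)) by (unfold in01 in *; lra).
     rewrite rho_1b, vv_1b, H0, K0 by (unfold in01 in *; lra). auto.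
   - lra.
   - rewrite rho_1c, p1; auto; lra. }
 assert (Eq2 : forall t, in01 t -> Pm (2/3) t = P3 (2/3) t).
 { intros t Ht. unfold P3, Pm, F3, Gm, Gi, Am, Bm.
   replace (c01 (3 - 3 * (2/3))) with 1 by (unfold c01, Rmax, Rmin; dec; lra).
   replace (c01 (3 * (2/3) - 1)) with 1 by (unfold c01, Rmax, Rmin; dec; lra).
   destruct (Rle_dec t (2/3)); destruct (Rle_dec t (/3)).
   - rewrite rho_1a, q0; auto.
   - rewrite (c01_id (3*t-1)) by (unfold in01 in *; lra).
     rewrite rho_1b, vv_1b, H0, K1 by (unfold in01 in *; lra). auto.
   - lra.
   - rewrite rho_1c, q1; auto; lra. }
 exists (fun s t => if Rle_dec s (/3) then P1 s t else B23 s t).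
 split; [|split; [|split]].
 - apply cont2_glue_s; auto.
   + apply cont2_glue_s; auto.
   + intros t Ht. unfold B23. destruct (Rle_dec (/3) (2/3)); [|lra]. auto.
 - intros t Ht. destruct (Rle_dec 0 (/3)); [|lra]. unfold P1, F1.
   replace (c01 (3*0)) with 0 by (unfold c01, Rmax, Rmin; dec; lra).
   rewrite rho_0, vv_0, H1; auto.
 - intros t Ht. destruct (Rle_dec 1 (/3)); [lra|]. unfold B23.
   destruct (Rle_dec 1 (2/3)); [lra|]. unfold P3, F3.
   replace (c01 (3-3*1)) with 0 by (unfold c01, Rmax, Rmin; dec; lra).
   rewrite rho_0, vv_0, H1; auto.
 - intros s Hs. assert (I0 : in01 0) by (unfold in01; lra).
   assert (I1 : in01 1) by (unfold in01; lra).
   destruct (Rle_dec s (/3)).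
   + unfold P1, F1. rewrite rho_l0, vv_l0, rho_l1, vv_l1, H1, H1, p0, p1 by apply c01_in. auto.
   + unfold B23. destruct (Rle_dec s (2/3)).
     * unfold Pm, Gm, Gi, Bm. destruct (Rle_dec 0 (2/3)); [|lra].
       destruct (Rle_dec 0 (/3)); [|lra]. destruct (Rle_dec 1 (2/3)); [lra|].
       rewrite vv_l0, vv_l1, H1 by auto. auto.
     * unfold P3, F3. rewrite rho_l0, vv_l0, rho_l1, vv_l1, H1, H1, q0, q1 by apply c01_in. auto.
Qed.

Lemma part1 : forall (X Y : TopSpace) (k : X -> Y) (x : X),
      homotopy_equivalence k ->
      transfinitely_commutative Y (k x) ->
      transfinitely_commutative X x.
Proof.
 intros X Y k x [Hk [g [Hg [[H [HH [H0 H1]]] _]]]] HY alpha Hnull phi Hphi p q Hp Hq.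
 assert (Hpc : path_continuous p) by (eapply tau_cont; eauto).
 assert (Hqc : path_continuous q) by (eapply tau_cont; [apply null_perm; eauto | exact Hq]).
 assert (p0 : p 0 = x) by (apply (proj1 Hp); apply cantor0).
 assert (p1 : p 1 = x) by (apply (proj1 Hp); apply cantor1).
 assert (q0 : q 0 = x) by (apply (proj1 Hq); apply cantor0).
 assert (q1 : q 1 = x) by (apply (proj1 Hq); apply cantor1).
 destruct (HY (fun n t => k (alpha n t)) (null_map X Y k x alpha Hk Hnull) phi Hphi
   (fun t => k (p t)) (fun t => k (q t))) as [K [HKc [HK0 [HK1 HKe]]]].
 { split. intros t Ht. rewrite (proj1 Hp t Ht); auto.
   intros m j t Hj Ht. rewrite (proj2 Hp m j t Hj Ht); auto. }
 { split. intros t Ht. rewrite (proj1 Hq t Ht); auto.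
   intros m j t Hj Ht. rewrite (proj2 Hq m j t Hj Ht); auto. }
 apply (conj_homotopy X Y H g k K x p q); auto.
Qed.

Theorem mainTheorem5 :
  (forall (X Y : TopSpace) (k : X -> Y) (x : X),
      homotopy_equivalence k ->
      transfinitely_commutative Y (k x) ->
      transfinitely_commutative X x) /\
  (forall (X Y : TopSpace) (f : X -> Y) (x : X) (y : Y),
      based_homotopy_equivalence f x y ->
      (transfinitely_commutative X x <-> transfinitely_commutative Y y)).
Proof.
 split. exact part1.
 intros X Y f x y [Hf [Hfx [g [Hg [Hgy [Hgf Hfg]]]]]].
 assert (Bh : forall (Z W : TopSpace) (z : Z) (a b : Z -> W), based_homotopic z a b -> homotopic a b).
 { intros Z W z a b [H [HH [H0 [H1 _]]]]. exists H; auto. }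
 split; intros HT.
 - apply (part1 Y X g y). split; auto. exists f. split; auto. split; eapply Bh; eauto.
   rewrite Hgy; auto.
 - apply (part1 X Y f x). split; auto. exists g. split; auto. split; eapply Bh; eauto.
   rewrite Hfx; auto.
Qed.
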